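(* Let $S$ be a set of $n\ge 3$ points in the plane, let the underlying metric be the Euclidean metric, and let $v>1$ be the highway speed. Then a horizontal highway minimizing the travel-time diameter of $S$ among all horizontal highways can be computed in $O(n)$ time.
   Context: A highway is a straight line $h$. One travels with speed $1$ off the highway (distances measured in the Euclidean metric) and with speed $v$ along the highway. The travel time $t_h(p,q)$ is the minimum time of a path from $p$ to $q$ under these speeds; the travel-time diameter of $S$ for highway $h$ is $\max_{p,q\in S}t_h(p,q)$. *)

(* Defs.v *)
From HB Require Import structures.
From mathcomp Require Import all_boot all_order all_algebra.
From mathcomp Require Import all_classical all_reals.
Set Implicit Arguments. Unset Strict Implicit. Unset Printing Implicit Defensive.
Import Order.TTheory GRing.Theory Num.Theory.
Local Open Scope ring_scope.
Local Open Scope classical_set_scope.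

Section Geometry.
Variable R : realType.

Definition edist (p q : R * R) : R :=
  Num.sqrt ((p.1 - q.1) ^+ 2 + (p.2 - q.2) ^+ 2).

(* Travel time between p and q for the horizontal highway h = {y = c},
   speed 1 off the highway and speed v on it: either walk directly, or walk
   to a highway point (a, c), travel along h to (b, c), and walk to q. *)
Definition htime (v c : R) (p q : R * R) : R :=
  Num.min (edist p q)
    (inf [set t | exists a b : R,
            t = edist p (a, c) + `|a - b| / v + edist (b, c) q]).

Definition hdiam (v c : R) (S : seq (R * R)) : R :=
  \big[Num.max/0]_(p <- S) \big[Num.max/0]_(q <- S) htime v c p q.

End Geometry.

(* Model of computation: unit-cost real RAM.                           *)
(* Integer (nat) registers with +, - (truncated) used for indexing;    *)
(* an unbounded real memory with + - * / sqrt and comparisons; no      *)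
(* real-to-integer conversion (no floor).                              *)
Inductive aexp : Type :=
| ANum of nat
| AReg of nat
| AAdd of aexp & aexp
| ASub of aexp & aexp.

Inductive rexp : Type :=
| RNat of nat
| RMem of aexp
| RAdd of rexp & rexp
| RSub of rexp & rexp
| RMul of rexp & rexp
| RDiv of rexp & rexp
| RSqrt of rexp.

Inductive bexp : Type :=
| BRLt of rexp & rexp
| BRLe of rexp & rexp
| BALt of aexp & aexp
| BAEq of aexp & aexp
| BAnd of bexp & bexp
| BNot of bexp.

Inductive com : Type :=
| CSkip
| CNAsgn of nat & aexp
| CRStore of aexp & rexp
| CSeq of com & com
| CIf of bexp & com & com
| CWhile of bexp & com.

Section RAM.
Variable R : realType.

Record ramstate := RamState { nreg : nat -> nat; rmem : nat -> R }.

Fixpoint aeval (s : ramstate) (a : aexp) : nat :=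
  match a with
  | ANum k => k
  | AReg k => nreg s k
  | AAdd a1 a2 => (aeval s a1 + aeval s a2)%N
  | ASub a1 a2 => (aeval s a1 - aeval s a2)%N
  end.

Fixpoint reval (s : ramstate) (e : rexp) : R :=
  match e with
  | RNat k => k%:R
  | RMem a => rmem s (aeval s a)
  | RAdd e1 e2 => reval s e1 + reval s e2
  | RSub e1 e2 => reval s e1 - reval s e2
  | RMul e1 e2 => reval s e1 * reval s e2
  | RDiv e1 e2 => reval s e1 / reval s e2
  | RSqrt e1 => Num.sqrt (reval s e1)
  end.

Fixpoint beval (s : ramstate) (b : bexp) : bool :=
  match b with
  | BRLt e1 e2 => reval s e1 < reval s e2
  | BRLe e1 e2 => reval s e1 <= reval s e2
  | BALt a1 a2 => (aeval s a1 < aeval s a2)%N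
  | BAEq a1 a2 => aeval s a1 == aeval s a2
  | BAnd b1 b2 => beval s b1 && beval s b2
  | BNot b1 => ~~ beval s b1
  end.

Definition nupd (s : ramstate) (k m : nat) : ramstate :=
  RamState (fun j => if j == k then m else nreg s j) (rmem s).

Definition rupd (s : ramstate) (k : nat) (x : R) : ramstate :=
  RamState (nreg s) (fun j => if j == k then x else rmem s j).

Inductive exec : com -> ramstate -> nat -> ramstate -> Prop :=
| ExSkip s : exec CSkip s 1 s
| ExNAsgn k a s : exec (CNAsgn k a) s 1 (nupd s k (aeval s a))
| ExRStore a e s : exec (CRStore a e) s 1 (rupd s (aeval s a) (reval s e))
| ExSeq c1 c2 s s1 s2 t1 t2 :
    exec c1 s t1 s1 -> exec c2 s1 t2 s2 -> exec (CSeq c1 c2) s (t1 + t2) s2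
| ExIfT b c1 c2 s s' t :
    beval s b -> exec c1 s t s' -> exec (CIf b c1 c2) s t.+1 s'
| ExIfF b c1 c2 s s' t :
    ~~ beval s b -> exec c2 s t s' -> exec (CIf b c1 c2) s t.+1 s'
| ExWhileF b c s : ~~ beval s b -> exec (CWhile b c) s 1 s
| ExWhileT b c s s1 s2 t1 t2 :
    beval s b -> exec c s t1 s1 -> exec (CWhile b c) s1 t2 s2 ->
    exec (CWhile b c) s (t1 + t2).+1 s2.

(* Input encoding: nat register 0 holds n; mem[0] = v;
   mem[2i+1] = x_i, mem[2i+2] = y_i for the i-th point; all else 0.
   Output: the y-coordinate of the computed highway in mem[0]. *)
Definition init_state (v : R) (S : seq (R * R)) : ramstate :=
  RamState (fun j => if j == 0%N then size S else 0%N)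
           (fun j => if j == 0%N then v
                     else if odd j then (nth (0, 0) S j./2).1
                     else (nth (0, 0) S (j.-2)./2).2).

End RAM.

(* Main.v *)
Require Import Defs.
From HB Require Import structures.
From mathcomp Require Import all_boot all_order all_algebra.
From mathcomp Require Import all_classical all_reals.
From mathcomp Require Import ring lra zify.
From Stdlib Require Import Lia.
Import Order.TTheory GRing.Theory Num.Theory.
Local Open Scope ring_scope.
Local Open Scope classical_set_scope.

Lemma sq_le (F : realFieldType) (x y : F) : 0 <= x -> 0 <= y -> y ^+ 2 <= x ^+ 2 -> y <= x.
Proof. move=> *; nra. Qed.
Lemma cs_core (F : realFieldType) (v b u d s : F) : 1 < v -> b^+2 = v^+2 - 1 -> 0 <= b -> 0 <= u -> 0 <= d -> 0 <= s -> s^+2 = u^+2 + d^+2 -> u + b * d <= v * s.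
Proof. move=> hv hb b0 u0 d0 s0 ss.
apply: sq_le; [by apply: mulr_ge0; lra | by apply: addr_ge0 => //; apply: mulr_ge0|].
have e: (v*s)^+2 - (u+b*d)^+2 = (b*u-d)^+2.
  rewrite exprMn ss. have -> : v^+2 = b^+2+1 by lra. ring.
have := sqr_ge0 (b*u-d). lra. Qed.

Lemma sq_mono (F : realFieldType) (x y : F) : 0 <= x -> x <= y -> x ^+ 2 <= y ^+ 2.
Proof. move=> *; nra. Qed.

Lemma diff_core (F : realFieldType) (v s1 m X w : F) : 0 < v -> 0 <= s1 -> 0 <= m ->
  s1^+2 - m^+2 = X^+2 - w^+2 -> v * (X + w) <= s1 + m -> 0 <= w -> w <= X ->
  v * (s1 - m) <= X - w.
Proof.
move=> v0 s0 m0 e h w0 wX.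
have [z|pz] := eqVneq (s1 + m) 0.
  have s1z : s1 = 0 by lra. have mz : m = 0 by lra. rewrite s1z mz; lra.
have pos : 0 < s1 + m by rewrite lt_def pz; lra.
have key : (s1 + m) * (v * (s1 - m)) <= (s1 + m) * (X - w).
  have -> : (s1 + m) * (v * (s1 - m)) = v * (X + w) * (X - w).
    have -> : (s1 + m) * (v * (s1 - m)) = v * (s1^+2 - m^+2) by ring.
    rewrite e; ring.
  apply: ler_wpM2r; lra.
by rewrite ler_pM2l in key.
Qed.

Section Math.
Variable R : realType.
Variables v bt : R.
Hypothesis hv : 1 < v.
Hypothesis hb0 : 0 < bt.
Hypothesis hb2 : bt ^+ 2 = v ^+ 2 - 1.
Ltac hyps := have hv1 := hv; have hb1 := hb0; have hb3 := hb2.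

Lemma sqrt_facts {z : R} : 0 <= z -> 0 <= Num.sqrt z /\ Num.sqrt z ^+ 2 = z.
Proof. by move=> hz; split; [apply: sqrtr_ge0 | apply: sqr_sqrtr]. Qed.

Lemma cs (u d : R) : 0 <= u -> 0 <= d -> u + bt * d <= v * Num.sqrt (u ^+ 2 + d ^+ 2).
Proof.
move=> hu hd.
have [s0 ss] := sqrt_facts (addr_ge0 (sqr_ge0 u) (sqr_ge0 d)).
exact: cs_core hv hb2 (ltW hb0) hu hd s0 ss.
Qed.

Lemma sqA (x : R) : x ^+ 2 = `|x| ^+ 2.
Proof. by rewrite real_normK ?num_real. Qed.

Lemma leg_lb (p : R * R) a c :
  `|p.1 - a| + bt * `|p.2 - c| <= v * edist p (a, c).
Proof. by rewrite /edist /= [(p.1 - a) ^+ 2]sqA [(p.2 - c) ^+ 2]sqA; apply: cs. Qed.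

Lemma leg_lb' (q : R * R) b c :
  `|b - q.1| + bt * `|q.2 - c| <= v * edist (b, c) q.
Proof.
by rewrite /edist /= [(b - q.1) ^+ 2]sqA [(c - q.2) ^+ 2]sqA [`|c - q.2|]distrC; apply: cs.
Qed.

Definition path (c : R) (p q : R * R) (a b : R) :=
  edist p (a, c) + `|a - b| / v + edist (b, c) q.

Lemma path_lb c p q a b :
  (`|p.1 - q.1| + bt * (`|p.2 - c| + `|q.2 - c|)) / v <= path c p q a b.
Proof.
hyps; have v0 : 0 < v by lra.
rewrite ler_pdivrMr // /path.
have h1 := leg_lb p a c. have h2 := leg_lb' q b c.
have t1 := ler_distD a p.1 q.1. have t2 := ler_distD b a q.1.
have -> : (edist p (a, c) + `|a - b| / v + edist (b, c) q) * v =
   v * edist p (a, c) + `|a - b| + v * edist (b, c) q.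
  by field; lra.
lra.
Qed.

Lemma path_ge0 c p q a b : 0 <= path c p q a b.
Proof.
rewrite /path /edist; hyps; have v0 : 0 < v by lra.
apply: addr_ge0; [apply: addr_ge0|]; rewrite ?sqrtr_ge0 //.
by apply: divr_ge0; rewrite ?normr_ge0 ?ltW.
Qed.

Lemma minkowski {u1 u2 d1 d2 : R} : 0 <= u1 -> 0 <= u2 -> 0 <= d1 -> 0 <= d2 ->
  Num.sqrt ((u1 + u2) ^+ 2 + (d1 + d2) ^+ 2) <=
  Num.sqrt (u1 ^+ 2 + d1 ^+ 2) + Num.sqrt (u2 ^+ 2 + d2 ^+ 2).
Proof.
move=> h1 h2 h3 h4.
have [s0 ss] := sqrt_facts (addr_ge0 (sqr_ge0 (u1 + u2)) (sqr_ge0 (d1 + d2))).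
have [s10 ss1] := sqrt_facts (addr_ge0 (sqr_ge0 u1) (sqr_ge0 d1)).
have [s20 ss2] := sqrt_facts (addr_ge0 (sqr_ge0 u2) (sqr_ge0 d2)).
set s := Num.sqrt _ in s0 ss *; set s1 := Num.sqrt _ in s10 ss1 *;
set s2 := Num.sqrt _ in s20 ss2 *.
have hp : u1 * u2 + d1 * d2 <= s1 * s2.
  have e : (s1 * s2) ^+ 2 - (u1 * u2 + d1 * d2) ^+ 2 = (u1 * d2 - u2 * d1) ^+ 2.
    by rewrite exprMn ss1 ss2; ring.
  have := sqr_ge0 (u1 * d2 - u2 * d1).
  have : 0 <= s1 * s2 by apply: mulr_ge0.
  nra.
nra.
Qed.


Lemma path_lb_inel c p q a b : bt * `|p.1 - q.1| < `|p.2 - q.2| ->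
  edist p q <= path c p q a b.
Proof.
move=> hin; hyps.
have v0 : 0 < v by lra.
set X := `|p.1 - q.1| in hin *; set Y := `|p.2 - q.2| in hin *.
set u1 := `|p.1 - a|; set d1 := `|p.2 - c|; set u2 := `|b - q.1|; set d2 := `|q.2 - c|.
have eE : edist p q = Num.sqrt (X ^+ 2 + Y ^+ 2) by rewrite /edist -!sqA.
have e1 : edist p (a, c) = Num.sqrt (u1 ^+ 2 + d1 ^+ 2) by rewrite /edist /= -!sqA.
have e2 : edist (b, c) q = Num.sqrt (u2 ^+ 2 + d2 ^+ 2).
  by rewrite /edist /= /d2 distrC -!sqA.
have tX : X <= u1 + `|a - b| + u2.
  have := ler_distD a p.1 q.1; have := ler_distD b a q.1; rewrite /X /u1 /u2; lra.
have tY : Y <= d1 + d2.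
  by have := ler_distD c p.2 q.2; rewrite /Y /d1 /d2 [`|c - q.2|]distrC.
have X0 : 0 <= X by apply: normr_ge0. have Y0 : 0 <= Y by apply: normr_ge0.
have u10 : 0 <= u1 by apply: normr_ge0. have u20 : 0 <= u2 by apply: normr_ge0.
have d10 : 0 <= d1 by apply: normr_ge0. have d20 : 0 <= d2 by apply: normr_ge0.
have ab0 : 0 <= `|a - b| by apply: normr_ge0.
have mk := minkowski u10 u20 d10 d20.
rewrite /path eE e1 e2.
set w := u1 + u2 in mk *; set D := d1 + d2 in mk tY *.
have w0 : 0 <= w by rewrite /w; lra.
have D0 : 0 <= D by lra.
have [[m0 mm] [s10 ss1]] := (sqrt_facts (addr_ge0 (sqr_ge0 w) (sqr_ge0 D)),
                             sqrt_facts (addr_ge0 (sqr_ge0 X) (sqr_ge0 D))).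
have abv : 0 <= `|a - b| / v by apply: divr_ge0; lra.
have [wX|Xw] := lerP X w.
  have : Num.sqrt (X ^+ 2 + Y ^+ 2) <= Num.sqrt (w ^+ 2 + D ^+ 2).
    apply: ler_wsqrtr; apply: lerD; apply: sq_mono; lra.
  lra.
have hE : Num.sqrt (X ^+ 2 + Y ^+ 2) <= Num.sqrt (X ^+ 2 + D ^+ 2).
  by apply: ler_wsqrtr; apply: lerD => //; apply: sq_mono; lra.
set s1 := Num.sqrt (X ^+ 2 + D ^+ 2) in hE s10 ss1 *.
set m := Num.sqrt (w ^+ 2 + D ^+ 2) in mk m0 mm *.
have bX : bt * X <= D by lra.
have bw : bt * w <= bt * X by apply: ler_wpM2l; lra.
have hs1 : v * X <= s1.
  apply: sq_le => //; first by apply: mulr_ge0; lra.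
  rewrite ss1 exprMn.
  have : (bt * X) ^+ 2 <= D ^+ 2 by apply: sq_mono; [apply: mulr_ge0|]; lra.
  rewrite exprMn hb2; lra.
have hm : v * w <= m.
  apply: sq_le => //; first by apply: mulr_ge0; lra.
  rewrite mm exprMn.
  have : (bt * w) ^+ 2 <= D ^+ 2 by apply: sq_mono; [apply: mulr_ge0|]; lra.
  rewrite exprMn hb2; lra.
have key' : v * (s1 - m) <= X - w.
  apply: diff_core => //; [by rewrite ss1 mm; ring | lra | lra].
have : (X - w) / v <= `|a - b| / v by apply: ler_wpM2r; [rewrite invr_ge0; lra | rewrite /w; lra].
have : s1 - m <= (X - w) / v by rewrite ler_pdivlMr // mulrC.
lra.
Qed.


Definition Xd (p q : R * R) := `|p.1 - q.1|.
Definition Yd (p q : R * R) := `|p.2 - q.2|.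
Definition Dd (c : R) (p q : R * R) := `|p.2 - c| + `|q.2 - c|.
Definition LB (p q : R * R) :=
  if bt * Xd p q < Yd p q then edist p q else (Xd p q + bt * Yd p q) / v.

Lemma htimeE c p q :
  htime v c p q = Num.min (edist p q) (inf [set t | exists a b, t = path c p q a b]).
Proof. by []. Qed.

Lemma E_ge p q : (Xd p q + bt * Yd p q) / v <= edist p q.
Proof.
hyps; have v0 : 0 < v by lra.
rewrite ler_pdivrMr // [edist _ _ * _]mulrC /edist sqA [(p.2 - q.2) ^+ 2]sqA.
by apply: cs; apply: normr_ge0.
Qed.

Lemma Y_le_D c p q : Yd p q <= Dd c p q.
Proof. by have := ler_distD c p.2 q.2; rewrite /Yd /Dd [`|c - q.2|]distrC. Qed.

Lemma hset_ne c p q : [set t | exists a b, t = path c p q a b] !=set0.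
Proof. by exists (path c p q 0 0); exists 0, 0. Qed.

Lemma hset_lb c p q : has_lbound [set t | exists a b, t = path c p q a b].
Proof. by exists 0 => t [a [b ->]]; apply: path_ge0. Qed.

Lemma ht_lb c p q : LB p q <= htime v c p q.
Proof.
hyps; have v0 : 0 < v by lra.
rewrite htimeE le_min; apply/andP; split.
  rewrite /LB; case: ifP => _; [exact: le_refl | exact: E_ge].
apply: lb_le_inf; first exact: hset_ne.
move=> t [a [b ->]]; rewrite /LB; case: ifP => h; first exact: path_lb_inel.
apply: le_trans (path_lb c p q a b).
apply: ler_wpM2r; first by rewrite invr_ge0; lra.
have := Y_le_D c p q; rewrite /Dd /Xd => hh.
have : bt * Yd p q <= bt * (`|p.2 - c| + `|q.2 - c|) by apply: ler_wpM2l; lra.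
lra.
Qed.

Lemma ht_ubE c p q : htime v c p q <= edist p q.
Proof. by rewrite htimeE ge_min le_refl. Qed.

Lemma attain {c p q} {sg : R} : (sg = 1 \/ sg = -1) -> q.1 - p.1 = sg * Xd p q ->
  Dd c p q <= bt * Xd p q ->
  path c p q (p.1 + sg * `|p.2 - c| / bt) (q.1 - sg * `|q.2 - c| / bt) =
  (Xd p q + bt * Dd c p q) / v.
Proof.
move=> hs hX hD; hyps.
have v0 : 0 < v by lra. have bn : bt != 0 by rewrite gt_eqF.
have vn : v != 0 by rewrite gt_eqF.
have s2 : sg ^+ 2 = 1 by case: hs => ->; rewrite ?expr1n ?sqrrN ?expr1n.
have v2 : v ^+ 2 = bt ^+ 2 + 1 by lra.
set d1 := `|p.2 - c|; set d2 := `|q.2 - c|.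
have d10 : 0 <= d1 by apply: normr_ge0. have d20 : 0 <= d2 by apply: normr_ge0.
have leg : forall (z d : R), 0 <= d -> z ^+ 2 = d ^+ 2 ->
    Num.sqrt ((sg * d / bt) ^+ 2 + z ^+ 2) = d * v / bt.
  move=> z d d0 ez.
  have -> : (sg * d / bt) ^+ 2 + z ^+ 2 = (d * v / bt) ^+ 2.
    rewrite ez.
    have -> : (sg * d / bt) ^+ 2 = sg ^+ 2 * d ^+ 2 / bt ^+ 2 by field.
    have -> : (d * v / bt) ^+ 2 = d ^+ 2 * v ^+ 2 / bt ^+ 2 by field.
    by rewrite s2 v2; field.
  rewrite sqrtr_sqr ger0_norm //; apply: divr_ge0; [apply: mulr_ge0|]; lra.
rewrite /path /edist /=.
have -> : p.1 - (p.1 + sg * d1 / bt) = - (sg * d1 / bt) by ring.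
rewrite sqrrN leg //; last by rewrite /d1 -sqA.
have -> : (q.1 - sg * d2 / bt - q.1) = - (sg * d2 / bt) by ring.
rewrite sqrrN leg //; last by rewrite /d2 -sqA; ring.
have -> : p.1 + sg * d1 / bt - (q.1 - sg * d2 / bt) = sg * (Dd c p q / bt - Xd p q).
  rewrite /Dd -/d1 -/d2; have -> : p.1 = q.1 - sg * Xd p q by lra.
  by field.
have hD' : Dd c p q / bt <= Xd p q by rewrite ler_pdivrMr // mulrC.
have -> : `|sg * (Dd c p q / bt - Xd p q)| = Xd p q - Dd c p q / bt.
  rewrite normrM; case: hs => ->; rewrite ?normrN normr1 mul1r ler0_norm; lra.
rewrite /Dd -/d1 -/d2.
apply/eqP; rewrite -subr_eq0; apply/eqP.
have -> : d1 * v / bt + (Xd p q - (d1 + d2) / bt) / v + d2 * v / bt -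
  (Xd p q + bt * (d1 + d2)) / v = (d1 + d2) * (v ^+ 2 - 1 - bt ^+ 2) / (v * bt).
  by field; rewrite bn vn.
by rewrite hb2 (_ : v ^+ 2 - 1 - (v ^+ 2 - 1) = 0) ?mulr0 ?mul0r //; ring.
Qed.


Lemma ht_ubL c {p q} : ~~ (bt * Xd p q < Yd p q) ->
  htime v c p q <= (Xd p q + bt * Dd c p q) / v.
Proof.
rewrite -leNgt => hel; hyps.
have v0 : 0 < v by lra.
have X0 : 0 <= Xd p q by apply: normr_ge0. have Y0 : 0 <= Yd p q by apply: normr_ge0.
have [hD|hD] := lerP (Dd c p q) (bt * Xd p q).
  rewrite htimeE ge_min; apply/orP; right.
  have [sg [hs hX]] : exists sg : R, (sg = 1 \/ sg = -1) /\ q.1 - p.1 = sg * Xd p q.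
    have [h|h] := lerP p.1 q.1.
      exists 1; split; first by left.
      by rewrite mul1r /Xd ler0_norm ?opprB //; lra.
    exists (-1); split; first by right.
    by rewrite mulN1r /Xd ger0_norm; lra.
  rewrite -(attain hs hX hD).
  by apply: (ge_inf (hset_lb c p q)); do 2 eexists.
apply: le_trans (ht_ubE c p q) _.
have hE : edist p q <= v * Xd p q.
  have ee : edist p q = Num.sqrt (Xd p q ^+ 2 + Yd p q ^+ 2) by rewrite /edist -!sqA.
  have [e0 e2] := sqrt_facts (addr_ge0 (sqr_ge0 (Xd p q)) (sqr_ge0 (Yd p q))).
  rewrite ee; apply: sq_le; first by apply: mulr_ge0; lra.
    done.
  rewrite e2 exprMn.
  have : Yd p q ^+ 2 <= (bt * Xd p q) ^+ 2 by apply: sq_mono.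
  rewrite exprMn hb2; lra.
apply: le_trans hE _.
rewrite ler_pdivlMr //.
have : bt * (bt * Xd p q) <= bt * Dd c p q by apply: ler_wpM2l; lra.
have -> : bt * (bt * Xd p q) = (v ^+ 2 - 1) * Xd p q by rewrite mulrA -expr2 hb2.
move=> hh. rewrite expr2 in hh. nra.
Qed.


Lemma hdiam_ge c {S p q} : p \in S -> q \in S -> htime v c p q <= hdiam v c S.
Proof.
move=> hp hq; rewrite /hdiam.
apply: le_trans (le_bigmax_seq 0 p xpredT
   (fun p => \big[Num.max/0]_(q <- S) htime v c p q) hp isT).
exact: (le_bigmax_seq 0 q xpredT (fun q => htime v c p q) hq isT).
Qed.

Lemma hdiam_ge0 c S : 0 <= hdiam v c S.
Proof. exact: bigmax_ge_id. Qed.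

Lemma hdiam_le c S H : 0 <= H -> (forall p q, p \in S -> q \in S -> htime v c p q <= H) ->
  hdiam v c S <= H.
Proof.
move=> H0 h; rewrite /hdiam big_seq; apply: bigmax_le => // p hp.
rewrite big_seq; apply: bigmax_le => // q hq; exact: h.
Qed.

Definition sc1 (p : R * R) := p.1 + bt * p.2.
Definition sc2 (p : R * R) := p.1 - bt * p.2.

Lemma opt_main (S : seq (R * R)) (A1 B1 A2 B2 : R) :
  (forall p, p \in S -> [/\ B1 <= sc1 p, sc1 p <= A1, B2 <= sc2 p & sc2 p <= A2]) ->
  (exists2 r, r \in S & sc1 r = A1) -> (exists2 r, r \in S & sc1 r = B1) ->
  (exists2 r, r \in S & sc2 r = A2) -> (exists2 r, r \in S & sc2 r = B2) ->
  forall c, hdiam v ((A1 - B2 - Num.max (A1 - B1) (A2 - B2)) / (2 * bt)) S <= hdiam v c S.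
Proof.
move=> hB [r1 r1S e1] [r2 r2S e2] [r3 r3S e3] [r4 r4S e4] c; hyps.
have v0 : 0 < v by lra.
set M := Num.max (A1 - B1) (A2 - B2).
have M1 : A1 - B1 <= M by rewrite le_max lexx.
have M2 : A2 - B2 <= M by rewrite le_max lexx orbT.
set c0 := (A1 - B2 - M) / (2 * bt).
have hc : 2 * (bt * c0) = A1 - B2 - M.
  by rewrite /c0; field; rewrite gt_eqF.
have hM : M / v <= hdiam v c S.
  have key : forall a b, a \in S -> b \in S -> M <= Xd a b + bt * Yd a b ->
      M / v <= hdiam v c S.
    move=> a b aS bS hab.
    apply: le_trans (hdiam_ge c aS bS); apply: le_trans (ht_lb c a b).
    apply: le_trans _ (_ : (Xd a b + bt * Yd a b) / v <= LB a b).
      by apply: ler_wpM2r => //; rewrite invr_ge0; lra.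
    rewrite /LB; case: ifP => _; [exact: E_ge | exact: le_refl].
  have nx : forall a b : R * R, a.1 - b.1 <= Xd a b by move=> a b; apply: ler_norm.
  have ny : forall a b : R * R, a.2 - b.2 <= Yd a b by move=> a b; apply: ler_norm.
  have ny' : forall a b : R * R, - (a.2 - b.2) <= Yd a b.
    by move=> a b; rewrite /Yd -normrN; apply: ler_norm.
  have [hh|hh] := lerP (A1 - B1) (A2 - B2).
    apply: (key r3 r4) => //; rewrite /M ge_max; apply/andP.
    have := nx r3 r4; have := ny' r3 r4.
    have : bt * (- (r3.2 - r4.2)) <= bt * Yd r3 r4 by apply: ler_wpM2l; [lra | apply: ny'].
    rewrite -e3 -e4 /sc2 in hh * => *; split; lra.
  apply: (key r1 r2) => //; rewrite /M ge_max; apply/andP.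
  have := nx r1 r2.
  have : bt * (r1.2 - r2.2) <= bt * Yd r1 r2 by apply: ler_wpM2l; [lra | apply: ny].
  rewrite -e1 -e2 /sc1 in hh * => *; split; lra.
apply: hdiam_le; first exact: hdiam_ge0.
move=> p q pS qS.
have [hin|hel] := boolP (bt * Xd p q < Yd p q).
  apply: le_trans (ht_ubE c0 p q) _.
  apply: (le_trans _ (hdiam_ge c pS qS)); apply: (le_trans _ (ht_lb c p q)).
  by rewrite /LB hin.
apply: le_trans (ht_ubL c0 hel) _; apply: (le_trans _ hM).
apply: ler_wpM2r; first by rewrite invr_ge0; lra.
have [hp1 hp2 hp3 hp4] := hB p pS; have [hq1 hq2 hq3 hq4] := hB q qS.
move: hp1 hp2 hp3 hp4 hq1 hq2 hq3 hq4; rewrite /sc1 /sc2 /Xd /Dd => *.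
have [h1|h1] := lerP 0 (p.1 - q.1);
  first [rewrite (ger0_norm h1) | rewrite (ltr0_norm h1)];
have [h2|h2] := lerP 0 (p.2 - c0);
  first [rewrite (ger0_norm h2) | rewrite (ltr0_norm h2)];
have [h3|h3] := lerP 0 (q.2 - c0);
  first [rewrite (ger0_norm h3) | rewrite (ltr0_norm h3)];
  try nra.
Qed.

End Math.

Lemma mx_val (R : rcfType) (a e : R) : (a + e + Num.sqrt ((a - e) * (a - e))) / 2%:R = Num.max a e.
Proof. rewrite -expr2 sqrtr_sqr; case: (leP a e) => h.
  rewrite ler0_norm; [lra|lra]. rewrite gtr0_norm; lra. Qed.
Lemma mn_val (R : rcfType) (a e : R) : (a + e - Num.sqrt ((a - e) * (a - e))) / 2%:R = Num.min a e.
Proof. rewrite -expr2 sqrtr_sqr; case: (leP a e) => h.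
  rewrite ler0_norm; [lra|lra]. rewrite gtr0_norm; lra. Qed.
Lemma half_x k : ((k + k + 1)./2 = k)%N.
Proof. by rewrite addnn addn1 -[k.*2.+1]/(true + k.*2)%N half_bit_double. Qed.
Lemma odd_x k : odd (k + k + 1).
Proof. by rewrite addnn addn1 /= odd_double. Qed.
Lemma half_y k : ((k + k + 1 + 1).-2./2 = k)%N.
Proof. by rewrite addnn !addn1 /= doubleK. Qed.
Lemma odd_y k : odd (k + k + 1 + 1) = false.
Proof. by rewrite addnn !addn1 /= odd_double. Qed.

Definition xiE := RMem (AReg 1).
Definition yiE := RMem (AAdd (AReg 1) (ANum 1)).
Definition btE := RMem (AReg 2).
Definition e1E := RAdd xiE (RMul btE yiE).
Definition e2E := RSub xiE (RMul btE yiE).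
Definition adr k := AAdd (AReg 2) (ANum k).
Definition cell k := RMem (adr k).
Definition mxE a e := RDiv (RAdd (RAdd a e) (RSqrt (RMul (RSub a e) (RSub a e)))) (RNat 2).
Definition mnE a e := RDiv (RSub (RAdd a e) (RSqrt (RMul (RSub a e) (RSub a e)))) (RNat 2).
Definition body :=
  CSeq (CRStore (adr 1) (mxE (cell 1) e1E))
  (CSeq (CRStore (adr 2) (mnE (cell 2) e1E))
  (CSeq (CRStore (adr 3) (mxE (cell 3) e2E))
  (CSeq (CRStore (adr 4) (mnE (cell 4) e2E))
  (CSeq (CNAsgn 1 (AAdd (AReg 1) (ANum 2)))
        (CNAsgn 3 (AAdd (AReg 3) (ANum 1))))))).
Definition loop := CWhile (BALt (AReg 3) (AReg 0)) body.
Definition prelude :=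
  CSeq (CNAsgn 2 (AAdd (AAdd (AReg 0) (AReg 0)) (ANum 1)))
  (CSeq (CRStore (AReg 2) (RSqrt (RSub (RMul (RMem (ANum 0)) (RMem (ANum 0))) (RNat 1))))
  (CSeq (CNAsgn 1 (ANum 1))
  (CSeq (CNAsgn 3 (ANum 0))
  (CSeq (CRStore (adr 1) e1E)
  (CSeq (CRStore (adr 2) e1E)
  (CSeq (CRStore (adr 3) e2E) (CRStore (adr 4) e2E))))))).
Definition fexpr := (RDiv (RSub (RSub (cell 1) (cell 4))
                               (mxE (RSub (cell 1) (cell 2)) (RSub (cell 3) (cell 4))))
                         (RMul (RNat 2) btE)).
Definition final := CRStore (ANum 0) fexpr.
Definition prog := CSeq prelude (CSeq loop final).

Section Ram.
Variable R : realType.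
Variable v : R.
Variable S : seq (R * R).
Let n := size S.
Let s0 := init_state v S.
Let bt := Num.sqrt (v * v - 1%:R).
Let pt k := nth (0, 0) S k.
Let f1 k := (pt k).1 + bt * (pt k).2.
Let f2 k := (pt k).1 - bt * (pt k).2.

Fixpoint runf (op : R -> R -> R) (f : nat -> R) (i : nat) : R :=
  match i with 0 => f 0%N | i'.+1 => op (runf op f i') (f i') end.

Definition Inv' (s : ramstate R) (i : nat) (m1 m2 m3 m4 : R) :=
  [/\ nreg s 0 = n, nreg s 1 = (i + i + 1)%N, nreg s 2 = (n + n + 1)%N, nreg s 3 = i &
   [/\ (forall j, (j < n + n + 1)%N -> rmem s j = rmem s0 j),
       rmem s (n + n + 1) = bt,
       rmem s (n + n + 1 + 1) = m1,
       rmem s (n + n + 1 + 2) = m2 &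
       rmem s (n + n + 1 + 3) = m3 /\
       rmem s (n + n + 1 + 4) = m4]].

Definition Inv s i := Inv' s i (runf Num.max f1 i) (runf Num.min f1 i)
                              (runf Num.max f2 i) (runf Num.min f2 i).

Lemma s0x k : rmem s0 (k + k + 1) = (pt k).1.
Proof.
rewrite /s0 /init_state /= (_ : (k + k + 1 == 0)%N = false); last by rewrite addn1. by rewrite odd_x half_x.
Qed.

Lemma s0y k : rmem s0 (k + k + 1 + 1) = (pt k).2.
Proof.
rewrite /s0 /init_state /= (_ : (k + k + 1 + 1 == 0)%N = false); last by rewrite addn1. by rewrite odd_y half_y.
Qed.


Lemma ev_mx (s : ramstate R) a e : reval s (mxE a e) = Num.max (reval s a) (reval s e).
Proof. exact: mx_val. Qed.
Lemma ev_mn (s : ramstate R) a e : reval s (mnE a e) = Num.min (reval s a) (reval s e).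
Proof. exact: mn_val. Qed.

Section Ev.
Variables (s : ramstate R) (i : nat) (m1 m2 m3 m4 : R).
Hypothesis H : Inv' s i m1 m2 m3 m4.

Lemma ev_adr k : aeval s (adr k) = (n + n + 1 + k)%N.
Proof. by case: H => _ _ r2 _ _; rewrite /= r2. Qed.

Lemma ev_c1 : reval s (cell 1) = m1.
Proof. by case: H => _ _ r2 _ [_ _ c _ _]; rewrite /= r2 c. Qed.
Lemma ev_c2 : reval s (cell 2) = m2.
Proof. by case: H => _ _ r2 _ [_ _ _ c _]; rewrite /= r2 c. Qed.
Lemma ev_c3 : reval s (cell 3) = m3.
Proof. by case: H => _ _ r2 _ [_ _ _ _ [c _]]; rewrite /= r2 c. Qed.
Lemma ev_c4 : reval s (cell 4) = m4.
Proof. by case: H => _ _ r2 _ [_ _ _ _ [_ c]]; rewrite /= r2 c. Qed.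
Lemma ev_bt : reval s btE = bt.
Proof. by case: H => _ _ r2 _ [_ hb _ _ _]; rewrite /= r2. Qed.

Hypothesis lt : (i < n)%N.
Lemma ev_x : reval s xiE = (pt i).1.
Proof. case: H => _ r1 _ _ [hm _ _ _ _]; rewrite /= r1 hm ?s0x //; lia. Qed.
Lemma ev_y : reval s yiE = (pt i).2.
Proof. case: H => _ r1 _ _ [hm _ _ _ _]; rewrite /= r1 hm ?s0y //; lia. Qed.
Lemma ev_e1 : reval s e1E = f1 i.
Proof. by move: ev_x ev_y ev_bt; rewrite /e1E /= => -> -> ->. Qed.
Lemma ev_e2 : reval s e2E = f2 i.
Proof. by move: ev_x ev_y ev_bt; rewrite /e2E /= => -> -> ->. Qed.
End Ev.
Arguments ev_adr {s i m1 m2 m3 m4}.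
Arguments ev_c1 {s i m1 m2 m3 m4}.
Arguments ev_c2 {s i m1 m2 m3 m4}.
Arguments ev_c3 {s i m1 m2 m3 m4}.
Arguments ev_c4 {s i m1 m2 m3 m4}.
Arguments ev_bt {s i m1 m2 m3 m4}.
Arguments ev_e1 {s i m1 m2 m3 m4}.
Arguments ev_e2 {s i m1 m2 m3 m4}.

Lemma up1 (s : ramstate R) i m1 m2 m3 m4 x : Inv' s i m1 m2 m3 m4 ->
  Inv' (rupd s (n + n + 1 + 1) x) i x m2 m3 m4.
Proof.
case=> r0 r1 r2 r3 [hm hb c1 c2 [c3 c4]]; split => //; split => /=.
- by move=> j hj; rewrite ifN_eq ?hm //; apply/eqP; lia.
- by rewrite ifN_eq //; apply/eqP; lia.
- by rewrite eqxx.
- by rewrite ifN_eq //; apply/eqP; lia.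
- by rewrite !ifN_eq //; apply/eqP; lia.
Qed.

Lemma up2 (s : ramstate R) i m1 m2 m3 m4 x : Inv' s i m1 m2 m3 m4 ->
  Inv' (rupd s (n + n + 1 + 2) x) i m1 x m3 m4.
Proof.
case=> r0 r1 r2 r3 [hm hb c1 c2 [c3 c4]]; split => //; split => /=.
- by move=> j hj; rewrite ifN_eq ?hm //; apply/eqP; lia.
- by rewrite ifN_eq //; apply/eqP; lia.
- by rewrite ifN_eq //; apply/eqP; lia.
- by rewrite eqxx.
- by rewrite !ifN_eq //; apply/eqP; lia.
Qed.

Lemma up3 (s : ramstate R) i m1 m2 m3 m4 x : Inv' s i m1 m2 m3 m4 ->
  Inv' (rupd s (n + n + 1 + 3) x) i m1 m2 x m4.
Proof.
case=> r0 r1 r2 r3 [hm hb c1 c2 [c3 c4]]; split => //; split => /=.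
- by move=> j hj; rewrite ifN_eq ?hm //; apply/eqP; lia.
- by rewrite ifN_eq //; apply/eqP; lia.
- by rewrite ifN_eq //; apply/eqP; lia.
- by rewrite ifN_eq //; apply/eqP; lia.
- by rewrite eqxx ifN_eq //; apply/eqP; lia.
Qed.

Lemma up4 (s : ramstate R) i m1 m2 m3 m4 x : Inv' s i m1 m2 m3 m4 ->
  Inv' (rupd s (n + n + 1 + 4) x) i m1 m2 m3 x.
Proof.
case=> r0 r1 r2 r3 [hm hb c1 c2 [c3 c4]]; split => //; split => /=.
- by move=> j hj; rewrite ifN_eq ?hm //; apply/eqP; lia.
- by rewrite ifN_eq //; apply/eqP; lia.
- by rewrite ifN_eq //; apply/eqP; lia.
- by rewrite ifN_eq //; apply/eqP; lia.
- by rewrite eqxx ifN_eq //; apply/eqP; lia.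
Qed.

Lemma upr (s : ramstate R) i m1 m2 m3 m4 : Inv' s i m1 m2 m3 m4 ->
  Inv' (nupd (nupd s 1 (nreg s 1 + 2)) 3 (nreg (nupd s 1 (nreg s 1 + 2)) 3 + 1)) i.+1 m1 m2 m3 m4.
Proof.
case=> r0 r1 r2 r3 [hm hb c1 c2 [c3 c4]]; split => //=; rewrite ?r1 ?r3; try lia.
Qed.

Arguments up1 {s i m1 m2 m3 m4} x.
Arguments up2 {s i m1 m2 m3 m4} x.
Arguments up3 {s i m1 m2 m3 m4} x.
Arguments up4 {s i m1 m2 m3 m4} x.
Arguments upr {s i m1 m2 m3 m4}.

Lemma seq_store a e c (s : ramstate R) t s' :
  exec c (rupd s (aeval s a) (reval s e)) t s' -> exec (CSeq (CRStore a e) c) s (1 + t) s'.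
Proof. by move=> h; apply: ExSeq h; constructor. Qed.

Lemma step_store (P : ramstate R -> Prop) a e c (s : ramstate R) t k x :
  aeval s a = k -> reval s e = x -> (exists s', exec c (rupd s k x) t s' /\ P s') ->
  exists s', exec (CSeq (CRStore a e) c) s (1 + t) s' /\ P s'.
Proof. by move=> <- <- [s' [h p]]; exists s'; split => //; apply: seq_store. Qed.
Arguments step_store P {a e c s t k x}.

Lemma body_step s i : Inv s i -> (i < n)%N ->
  exists s', exec body s 6 s' /\ Inv s' i.+1.
Proof.
move=> H lt.
change 6%N with (1 + (1 + (1 + (1 + (1 + 1)))))%N.
rewrite /body.
apply: (step_store (fun s' => Inv s' i.+1) (ev_adr H 1) (etrans (ev_mx _ _ _) _)).
  by rewrite (ev_c1 H) (ev_e1 H lt).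
move: (up1 (Num.max (runf Num.max f1 i) (f1 i)) H) => {H}; move: (rupd _ _ _) => s1 H.
apply: (step_store (fun s' => Inv s' i.+1) (ev_adr H 2) (etrans (ev_mn _ _ _) _)).
  by rewrite (ev_c2 H) (ev_e1 H lt).
move: (up2 (Num.min (runf Num.min f1 i) (f1 i)) H) => {H}; move: (rupd _ _ _) => s2 H.
apply: (step_store (fun s' => Inv s' i.+1) (ev_adr H 3) (etrans (ev_mx _ _ _) _)).
  by rewrite (ev_c3 H) (ev_e2 H lt).
move: (up3 (Num.max (runf Num.max f2 i) (f2 i)) H) => {H}; move: (rupd _ _ _) => s3 H.
apply: (step_store (fun s' => Inv s' i.+1) (ev_adr H 4) (etrans (ev_mn _ _ _) _)).
  by rewrite (ev_c4 H) (ev_e2 H lt).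
move: (up4 (Num.min (runf Num.min f2 i) (f2 i)) H) => {H}; move: (rupd _ _ _) => s4 H.
eexists; split; first by apply: ExSeq; constructor.
exact: (upr H).
Qed.

Lemma loop_run k : forall s i, (i + k = n)%N -> Inv s i ->
  exists s', exec loop s (7 * k + 1) s' /\ Inv s' n.
Proof.
elim: k => [|k IH] s i e H.
  rewrite addn0 in e; subst i.
  exists s; split => //; rewrite muln0 add0n; apply: ExWhileF.
  by case: H => r0 _ _ r3 _; rewrite /= r0 r3 ltnn.
have lt : (i < n)%N by lia.
have [s1 [e1 H1]] := body_step s i H lt.
have [s' [e2 H2]] := IH s1 i.+1 (ltac:(lia)) H1.
exists s'; split => //.
have -> : (7 * k.+1 + 1 = (6 + (7 * k + 1)).+1)%N by lia.
apply: ExWhileT e1 e2.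
by case: H => r0 _ _ r3 _; rewrite /= r0 r3.
Qed.

Lemma prelude_run : (0 < n)%N -> exists s, exec prelude s0 8 s /\ Inv s 0.
Proof.
move=> n0.
set b := (n + n + 1)%N.
set sA := nupd (nupd (rupd (nupd s0 2 b) b bt) 1 1) 3 0.
have HA : Inv' sA 0 (rmem sA (b + 1)) (rmem sA (b + 2)) (rmem sA (b + 3)) (rmem sA (b + 4)).
  split => //; split => //=.
  - by move=> j hj; rewrite ifN_eq //; apply/eqP; lia.
  - by rewrite eqxx.
suff [s [e H]] : exists s, exec (CSeq (CRStore (adr 1) e1E)
  (CSeq (CRStore (adr 2) e1E) (CSeq (CRStore (adr 3) e2E) (CRStore (adr 4) e2E)))) sA
  (1 + (1 + (1 + 1))) s /\ Inv s 0.
  exists s; split => //.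
  change 8%N with (1 + (1 + (1 + (1 + (1 + (1 + (1 + 1)))))))%N.
  apply: ExSeq; first exact: ExNAsgn.
  apply: ExSeq; first exact: ExRStore.
  apply: ExSeq; first exact: ExNAsgn.
  apply: ExSeq; first exact: ExNAsgn.
  exact: e.
apply: (step_store (fun s => Inv s 0) (ev_adr HA 1) (ev_e1 HA n0)).
move: (up1 (f1 0) HA) => {HA}; move: (rupd _ _ _) => s1 H.
apply: (step_store (fun s => Inv s 0) (ev_adr H 2) (ev_e1 H n0)).
move: (up2 (f1 0) H) => {H}; move: (rupd _ _ _) => s2 H.
apply: (step_store (fun s => Inv s 0) (ev_adr H 3) (ev_e2 H n0)).
move: (up3 (f2 0) H) => {H}; move: (rupd _ _ _) => s3 H.
eexists; split; first exact: ExRStore.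
by rewrite (ev_adr H 4) (ev_e2 H n0); exact: (up4 (f2 0) H).
Qed.

Lemma final_val s : Inv s n ->
  reval s fexpr = (runf Num.max f1 n - runf Num.min f2 n -
     Num.max (runf Num.max f1 n - runf Num.min f1 n) (runf Num.max f2 n - runf Num.min f2 n))
     / (2 * bt).
Proof.
move=> H.
have -> : reval s fexpr = (reval s (cell 1) - reval s (cell 4) -
   reval s (mxE (RSub (cell 1) (cell 2)) (RSub (cell 3) (cell 4)))) / (2%:R * reval s btE) by [].
rewrite ev_mx /= -/(reval s (cell 1)).
have := ev_c1 H; have := ev_c2 H; have := ev_c3 H; have := ev_c4 H; have := ev_bt H.
rewrite /cell /= => -> -> -> -> ->.
done.
Qed.

End Ram.
Arguments runf {R}.

Lemma runf_max_ub (R : realType) (f : nat -> R) i k : (k < i)%N -> f k <= runf Num.max f i.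
Proof.
elim: i => // i IH; rewrite ltnS leq_eqVlt => /orP [/eqP -> | /IH h] /=;
  rewrite le_max ?lexx ?orbT //; by rewrite h.
Qed.

Lemma runf_min_lb (R : realType) (f : nat -> R) i k : (k < i)%N -> runf Num.min f i <= f k.
Proof.
elim: i => // i IH; rewrite ltnS leq_eqVlt => /orP [/eqP -> | /IH h] /=;
  rewrite ge_min ?lexx ?orbT //; by rewrite h.
Qed.

Lemma runf_max_att (R : realType) (f : nat -> R) i :
  exists2 k, (k <= i.-1)%N & runf Num.max f i = f k.
Proof.
elim: i => [|i [k hk e]] /=; first by exists 0%N.
have [h|h] := leP (runf Num.max f i) (f i); first by exists i.
by exists k => //; case: i hk {e h} => //= i hk; apply: leq_trans hk _.
Qed.

Lemma runf_min_att (R : realType) (f : nat -> R) i :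
  exists2 k, (k <= i.-1)%N & runf Num.min f i = f k.
Proof.
elim: i => [|i [k hk e]] /=; first by exists 0%N.
have [h|h] := leP (runf Num.min f i) (f i); last by exists i.
by exists k => //; case: i hk {e h} => //= i hk; apply: leq_trans hk _.
Qed.

Theorem theorem4 :
  exists (P : com) (K : nat),
    forall (R : realType) (S : seq (R * R)) (v : R),
      (3 <= size S)%N -> uniq S -> 1 < v ->
      exists (t : nat) (s' : ramstate R),
        exec P (init_state v S) t s' /\ (t <= K * size S)%N /\
        forall c : R, hdiam v (rmem s' 0) S <= hdiam v c S.
Proof.
exists prog, 17%N => R S v n3 _ hv.
have n0 : (0 < size S)%N by lia.
have [s1 [e1 H1]] := prelude_run R v S n0.
have [s2 [e2 H2]] := loop_run R v S (size S) s1 0 (add0n _) H1.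
exists (8 + ((7 * size S + 1) + 1))%N, (rupd s2 0 (reval s2 fexpr)).
split.
  apply: ExSeq e1 _; apply: ExSeq e2 _; exact: ExRStore.
split; first by lia.
move=> c; have -> : rmem (rupd s2 0 (reval s2 fexpr)) 0 = reval s2 fexpr by []. rewrite (final_val R v S s2 H2).
set bt := Num.sqrt (v * v - 1).
have hb0 : 0 < bt by rewrite sqrtr_gt0; nra.
have hb2 : bt ^+ 2 = v ^+ 2 - 1 by rewrite sqr_sqrtr ?expr2 //; nra.
set pt := nth (0, 0) S.
apply: (opt_main R v bt hv hb0 hb2).
- move=> p /(nthP (0, 0)) [k kn <-].
  rewrite /sc1 /sc2; split.
  + exact: (@runf_min_lb _ (fun k => (pt k).1 + bt * (pt k).2) _ _ kn).
  + exact: (@runf_max_ub _ (fun k => (pt k).1 + bt * (pt k).2) _ _ kn).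
  + exact: (@runf_min_lb _ (fun k => (pt k).1 - bt * (pt k).2) _ _ kn).
  + exact: (@runf_max_ub _ (fun k => (pt k).1 - bt * (pt k).2) _ _ kn).
- have [k hk ->] := @runf_max_att _ (fun k => (pt k).1 + bt * (pt k).2) (size S).
  by exists (pt k) => //; apply: mem_nth; move: hk; rewrite -ltnS prednK.
- have [k hk ->] := @runf_min_att _ (fun k => (pt k).1 + bt * (pt k).2) (size S).
  by exists (pt k) => //; apply: mem_nth; move: hk; rewrite -ltnS prednK.
- have [k hk ->] := @runf_max_att _ (fun k => (pt k).1 - bt * (pt k).2) (size S).
  by exists (pt k) => //; apply: mem_nth; move: hk; rewrite -ltnS prednK.
- have [k hk ->] := @runf_min_att _ (fun k => (pt k).1 - bt * (pt k).2) (size S).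
  by exists (pt k) => //; apply: mem_nth; move: hk; rewrite -ltnS prednK.
Qed.
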